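(* The following disintegration formula holds: $\mathbf{n}_+=\int_{\mathbb{R}}\frac{\mathrm{d}z}{2\pi z^2}\,\gamma_z$, where for $z\neq0$, $\gamma_z=\int_{0}^\infty\mathrm{d}v\,\frac{e^{-1/(2v)}}{2v^2}\,\mathbb{P}^{vz^2}_{0\to z}\otimes\Pi_{vz^2}$.
   Context: $U^+$ is the set of pairs $u=(x,y)$ of real continuous functions on $[0,R(u)]$ with $x(0)=y(0)=0$, $y(R(u))=0$, $y\ge0$. $n_+$ is Itô's measure of positive excursions of one-dimensional Brownian motion, normalized so that under $n_+$ the lifetime has ''law'' $\frac{\mathrm{d}r}{2\sqrt{2\pi r^3}}$ on $(0,\infty)$ and, conditionally on the lifetime being $r$, the excursion is a three-dimensional Bessel bridge of length $r$ from $0$ to $0$. $\mathbf{n}_+$ is the measure on $U^+$ given by $\mathbf{n}_+(\mathrm{d}x,\mathrm{d}y)=n_+(\mathrm{d}y)\,\mathbb{P}(X^{R(y)}\in\mathrm{d}x)$, where $X$ is a standard linear Brownian motion and $X^r=(X_t)_{0\le t\le r}$. $\mathbb{P}^{r}_{0\to z}$ denotes the law of a linear Brownian bridge of length $r$ from $0$ to $z$ (describing $x$) and $\Pi_r$ the law of a three-dimensional Bessel bridge of length $r$ from $0$ to $0$ (describing $y$). *)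

(* Defs.v *)
From HB Require Import structures.
From mathcomp Require Import all_boot all_order all_algebra.
From mathcomp Require Import all_classical all_reals all_analysis.
From mathcomp Require Import measurable_realfun.
Set Implicit Arguments. Unset Strict Implicit. Unset Printing Implicit Defensive.
Import Order.TTheory GRing.Theory Num.Theory.
Local Open Scope classical_set_scope.
Local Open Scope ring_scope.

Definition lifetime_density (R : realType) (r : R) : R :=
  (2 * Num.sqrt (2 * pi * r ^+ 3))^-1.

(* centered Gaussian density of variance r (law of X_r) *)
Definition gauss_density (R : realType) (r z : R) : R :=
  (Num.sqrt (2 * pi * r))^-1 * expR (- (z ^+ 2) / (2 * r)).

Definition z_density (R : realType) (z : R) : R := (2 * pi * z ^+ 2)^-1.

Definition v_density (R : realType) (v : R) : R :=
  expR (- (2 * v)^-1) / (2 * v ^+ 2).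

(* Ito measure n_+ (of pairs (x,y)) built from the Bessel-bridge kernel Pi
   and the law W r of X^r : n(A) = int dr/(2 sqrt(2pi r^3)) (W r (x) Pi r)(A) *)
Definition bold_n_plus (R : realType) d1 d2
    (X : measurableType d1) (Y : measurableType d2)
    (W : R -> set X -> \bar R) (Pi : R -> set Y -> \bar R) (A : set (X * Y))
    : \bar R :=
  (\int[@lebesgue_measure R]_(r in [set r : R | (0 < r)%R])
     ((lifetime_density r)%:E * (W r \x Pi r) A))%E.

Definition gamma_z (R : realType) d1 d2
    (X : measurableType d1) (Y : measurableType d2)
    (B : R -> R -> set X -> \bar R) (Pi : R -> set Y -> \bar R) (z : R)
    (A : set (X * Y)) : \bar R :=
  (\int[@lebesgue_measure R]_(v in [set v : R | (0 < v)%R])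
     ((v_density v)%:E * (B (v * z ^+ 2)%R z \x Pi (v * z ^+ 2)%R) A))%E.

(* Main.v *)
Require Import Defs.
From HB Require Import structures.
From mathcomp Require Import all_boot all_order all_algebra.
From mathcomp Require Import all_classical all_reals all_analysis.
From mathcomp Require Import measurable_realfun.
From mathcomp Require Import ring lra.
Import Order.TTheory GRing.Theory Num.Theory.
Import numFieldNormedType.Exports.
Local Open Scope classical_set_scope.
Local Open Scope ring_scope.

Lemma measurable_inv (R : realType) : measurable_fun [set: R] (@GRing.inv R).
Proof.
rewrite -(setUv [set (0:R)]).
apply/measurable_funU => //; first exact: measurableC.
split; first exact: measurable_fun_set1.
apply: (@subspace_continuous_measurable_fun R (~` [set 0]) GRing.inv).
  exact: measurableC.
have H : {in ~` [set (0:R)], continuous (fun x : R => x^-1)}.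
  by move=> x /[!inE] x0; apply: inv_continuous; apply/eqP.
exact: (continuous_in_subspaceT H).
Qed.

Lemma measurable_sqrt (R : realType) : measurable_fun [set: R] (@Num.sqrt R).
Proof. apply: continuous_measurable_fun; exact: sqrt_continuous. Qed.

Lemma lifetime_le0 (R : realType) (r : R) : r <= 0 -> lifetime_density r = 0.
Proof.
move=> r0; rewrite /lifetime_density.
have : 2 * pi * r ^+ 3 <= 0.
  rewrite pmulr_rle0; last by rewrite mulr_gt0 // pi_gt0.
  by rewrite exprSr mulr_ge0_le0 // sqr_ge0.
by move=> /ler0_sqrtr ->; rewrite mulr0 invr0.
Qed.

Lemma density_identity (R : realType) (v z : R) : 0 < v -> z != 0 ->
  z ^+ 2 * (lifetime_density (v * z ^+ 2) * gauss_density (v * z ^+ 2) z) =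
  z_density z * v_density v.
Proof.
move=> v0 z0.
have z2 : 0 < z ^+ 2 by rewrite lt_def sqrf_eq0 z0 sqr_ge0.
have pi0 : 0 < pi :> R by exact: pi_gt0.
set r := v * z ^+ 2.
have r0 : 0 < r by rewrite mulr_gt0.
have E1 : - (z ^+ 2) / (2 * r) = - (2 * v)^-1.
  by rewrite /r; field; rewrite z0 gt_eqF.
rewrite /lifetime_density /gauss_density /z_density /v_density E1.
set e := expR _.
have r3 : 0 < r ^+ 3 by exact: exprn_gt0.
have p3 : 0 < 2 * pi * r ^+ 3 by apply: mulr_gt0 => //; apply: mulr_gt0.
have p1 : 0 < 2 * pi * r by apply: mulr_gt0 => //; apply: mulr_gt0.
have p2 : 0 < 2 * pi * r ^+ 2.
  by apply: mulr_gt0 => //; [apply: mulr_gt0|exact: exprn_gt0].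
have s1 : 0 < Num.sqrt (2 * pi * r ^+ 3) by rewrite sqrtr_gt0.
have s2 : 0 < Num.sqrt (2 * pi * r) by rewrite sqrtr_gt0.
have S : Num.sqrt (2 * pi * r ^+ 3) * Num.sqrt (2 * pi * r) = 2 * pi * r ^+ 2.
  rewrite -sqrtrM; last exact: ltW.
  have -> : 2 * pi * r ^+ 3 * (2 * pi * r) = (2 * pi * r ^+ 2) ^+ 2 by ring.
  by rewrite sqrtr_sqr ger0_norm // ltW.
have -> : (2 * Num.sqrt (2 * pi * r ^+ 3))^-1 * ((Num.sqrt (2 * pi * r))^-1 * e)
  = e / (2 * (Num.sqrt (2 * pi * r ^+ 3) * Num.sqrt (2 * pi * r))).
  by field; rewrite !gt_eqF.
rewrite S /r; move: pi0; generalize (@pi R) => P P0; field.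
by rewrite z0 (gt_eqF v0) (gt_eqF P0).
Qed.

Lemma measurable_lifetime (R : realType) : measurable_fun setT (@lifetime_density R).
Proof.
rewrite /lifetime_density.
apply: (measurableT_comp (measurable_inv R)).
apply: measurable_funM => //.
apply: (measurableT_comp (measurable_sqrt R)).
apply: measurable_funM => //.
Qed.

Lemma measurable_gauss (R : realType) :
  measurable_fun setT (fun p : R * R => gauss_density p.1 p.2).
Proof.
rewrite /gauss_density.
apply: measurable_funM.
  apply: (measurableT_comp (measurable_inv R)).
  apply: (measurableT_comp (measurable_sqrt R)).
  apply: measurable_funM => //.
apply: (measurableT_comp (@measurable_expR R)).
apply: measurable_funM => //.
  apply: measurable_funN => //.
  apply: measurable_funX => //.
apply: (measurableT_comp (measurable_inv R)).
apply: measurable_funM => //.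
Qed.

Lemma measurable_vdensity (R : realType) : measurable_fun setT (@v_density R).
Proof.
rewrite /v_density.
apply: measurable_funM.
  apply: (measurableT_comp (@measurable_expR R)).
  apply: measurable_funN.
  apply: (measurableT_comp (measurable_inv R)).
  apply: measurable_funM => //.
apply: (measurableT_comp (measurable_inv R)).
apply: measurable_funM => //.
Qed.

Lemma scale_integral (R : realType) (c : R) (c0 : (0 < c)%R) (F : R -> \bar R)
  (mF : measurable_fun [set r : R | (0 < r)%R] F)
  (F0 : forall r, (0 < r)%R -> (0 <= F r)%E) :
  (\int[@lebesgue_measure R]_(r in [set r : R | (0 < r)%R]) F r =
  c%:E * \int[@lebesgue_measure R]_(v in [set v : R | (0 < v)%R]) F (c * v)%R)%E.
Proof.
pose phi := fun v : R => (c * v)%R.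
have mphi : measurable_fun setT phi by exact: mulrl_measurable.
pose pf := @measure_function_pushforward__canonical__measure_function_Measure _ _ (measurableTypeR R) (measurableTypeR R) R (@lebesgue_measure R) phi mphi.
pose mu := mscale (NngNum (ltW c0)) pf.
have mD : measurable [set r : R | (0 < r)%R].
  by rewrite -set_itv_o_infty; exact: measurable_itv.
have Hoc : forall X, ocitv X -> lebesgue_measure X = mu X.
  move=> _ [[a b] _ <-] /=.
  rewrite /mu /mscale /=; rewrite /pushforward.
  have -> : phi @^-1` `]a, b]%classic = `]a / c, b / c]%classic.
    apply/seteqP; split => x /=; rewrite !in_itv /= ?ler_pdivlMr ?ltr_pdivrMr ?ler_pdivrMr// ?ltr_pdivlMr//;
      rewrite /phi [(x * c)%R]mulrC //.
  rewrite !lebesgue_measure_itv /= !lte_fin ltr_pM2r ?invr_gt0//.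
  case: ifPn => ab; last by rewrite mule0.
  by rewrite -EFinM -!EFinB mulrBr ![(c * (_ / c))%R]mulrC !divfK ?gt_eqF.
have E : forall A, measurable A -> lebesgue_measure A = mu A.
  move=> A mA; exact: (@lebesgue_measure_unique R (mscale (NngNum (ltW c0)) pf) Hoc A mA).
rewrite (eq_measure_integral (mscale (NngNum (ltW c0)) pf)); last first.
  by move=> A mA _; exact: E.
rewrite ge0_integral_mscale //=; congr (_ * _)%E.
rewrite ge0_integral_pushforward //; last by move=> y /[!inE] y0; exact: F0.
have -> : phi @^-1` [set r : R | 0 < r] = [set r : R | 0 < r].
  by apply/seteqP; split => x /=; rewrite /phi pmulr_rgt0.
by [].
Qed.

Section mix.
Local Open Scope ereal_scope.
Import HBNNSimple.
Lemma mix_integral d d' (T : measurableType d) (X : measurableType d') (R : realType)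
 (mu : {measure set T -> \bar R}) (h : T -> R) (h0 : forall t, (0 <= h t)%R)
 (mh : measurable_fun setT h)
 (k : T -> {measure set X -> \bar R})
 (mk : forall U, measurable U -> measurable_fun setT (k ^~ U))
 (W : {measure set X -> \bar R})
 (HW : forall U, measurable U -> W U = \int[mu]_t ((h t)%:E * k t U))
 (f : X -> \bar R) (f0 : forall x, 0 <= f x) (mf : measurable_fun setT f) :
 \int[W]_x f x = \int[mu]_t ((h t)%:E * \int[k t]_x f x).
Proof.
have mh' : measurable_fun setT (fun t => (h t)%:E) by exact/measurable_EFinP.
have Hs (g : {nnsfun X >-> R}) :
    \int[W]_x (g x)%:E = \int[mu]_t ((h t)%:E * \int[k t]_x (g x)%:E).
  rewrite integralT_nnsfun sintegralE.
  rewrite (eq_integral (fun t => \sum_(r \in range g)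
      (h t)%:E * (r%:E * k t (g @^-1` [set r])))); last first.
    move=> t _; rewrite integralT_nnsfun sintegralE ge0_mule_fsumr //.
    by move=> r; exact: nnsfun_mulemu_ge0.
  rewrite ge0_integral_fsum //; last 2 first.
  - move=> r; apply: emeasurable_funM => //; apply: measurable_funeM.
    by apply: mk; exact: measurable_funPTI.
  - by move=> r t _; apply: mule_ge0; [rewrite lee_fin|exact: nnsfun_mulemu_ge0].
  apply: eq_fsbigr => r _.
  have [r0|r0] := ltP r 0%R.
    rewrite preimage_nnfun0 // measure0 mule0 integral0_eq // => t _.
    by rewrite measure0 !mule0.
  under eq_integral do rewrite muleCA.
  rewrite ge0_integralZl //; last 2 first.
  - apply: emeasurable_funM => //.
    by apply: mk; exact: measurable_funPTI.
  - by move=> t _; apply: mule_ge0; rewrite // lee_fin.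
  by rewrite -HW //; exact: measurable_funPTI.
pose g := nnsfun_approx measurableT mf.
have gf x : (g n x)%:E @[n --> \oo] --> f x by exact: cvg_nnsfun_approx.
have mg n : measurable_fun setT (fun x => (g n x)%:E) by exact/measurable_EFinP.
have g0 n x : 0 <= (g n x)%:E by rewrite lee_fin.
have ndg x : {homo (fun n => (g n x)%:E) : a b / (a <= b)%N >-> a <= b}.
  by move=> a b ab; rewrite lee_fin; exact/lefP/nd_nnsfun_approx.
transitivity (\int[W]_x limn (fun n => (g n x)%:E)).
  by apply/eq_integral => x _; apply/esym/cvg_lim => //; exact: gf.
rewrite monotone_convergence //.
under eq_fun do rewrite Hs.
have Ct t : (\int[k t]_x (g n x)%:E) @[n --> \oo] --> \int[k t]_x f x.
  have := @cvg_monotone_convergence _ _ _ (k t) setT measurableT (fun n x => (g n x)%:E)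
    (fun n => mg n) (fun n x _ => g0 n x) (fun x _ => ndg x).
  congr (_ --> _); apply: eq_integral => x _; exact/cvg_lim.
transitivity (\int[mu]_t limn (fun n => (h t)%:E * \int[k t]_x (g n x)%:E)); last first.
  apply/eq_integral => t _; apply/cvg_lim => //; apply: cvgeZl => //; exact: Ct.
rewrite monotone_convergence //.
- move=> n; apply: emeasurable_funM => //.
  apply: measurable_fun_integral_kernel => //.
- by move=> n t _; apply: mule_ge0; [rewrite lee_fin|exact: integral_ge0].
- move=> t _ a b ab; apply: lee_wpmul2l; first by rewrite lee_fin.
  by apply: ge0_le_integral => // x _; exact: ndg.
Qed.
End mix.

Lemma mfun_sec2 d (T : measurableType d) (R : realType) (f : R * R -> T)
  (mf : measurable_fun setT f) (r : R) : measurable_fun setT (fun z => f (r, z)).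
Proof. apply: (measurableT_comp mf); exact: measurable_fun_pair. Qed.

Lemma mfun_sec1 d (T : measurableType d) (R : realType) (f : R * R -> T)
  (mf : measurable_fun setT f) (z : R) : measurable_fun setT (fun r => f (r, z)).
Proof. apply: (measurableT_comp mf); exact: measurable_fun_pair. Qed.

Lemma mfun_scale d (T : measurableType d) (R : realType) (f : R * R -> T)
  (mf : measurable_fun setT f) (c z : R) : measurable_fun setT (fun v => f (c * v, z)).
Proof.
by apply: (measurableT_comp mf); apply: measurable_fun_pair => //; exact: mulrl_measurable.

Qed.

Arguments mfun_sec1 {d T R f} mf z.
Arguments mfun_sec2 {d T R f} mf r.
Lemma mfun_scaler d (T : measurableType d) (R : realType) (f : R * R -> T)
  (mf : measurable_fun setT f) (c z : R) : measurable_fun setT (fun v : R => f (v * c, z)).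
Proof.
apply: (measurableT_comp mf); apply: measurable_fun_pair => //.
exact: mulrr_measurable.
Qed.

Arguments mfun_scale {d T R f} mf c z.
Arguments mfun_scaler {d T R f} mf c z.

Lemma setT_D0 (R : realType) : setT `\ (0:R) = [set z : R | z != 0].
Proof.
apply/seteqP; split => z /=.
- by move=> [_ z0]; apply/eqP.
- by move=> z0; split => //; apply/eqP.
Qed.

Theorem proposition2p9 (R : realType) (d1 d2 : measure_display)
    (X : measurableType d1) (Y : measurableType d2)
    (endpt : R -> X -> R)
    (W : R -> probability X R) (B : R -> R -> probability X R)
    (Pi : R -> probability Y R)
    (endpt_meas : forall r, measurable_fun setT (endpt r))
    (B_end : forall r z, 0 < r -> B r z (endpt r @^-1` [set z]) = 1%E)
    (B_disint : forall r (S : set X), 0 < r -> measurable S ->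
        W r S = (\int[@lebesgue_measure R]_(z in setT)
                   ((gauss_density r z)%:E * B r z S))%E)
    (kernel_meas : forall A : set (X * Y), measurable A ->
        measurable_fun setT (fun p : R * R => ((B p.1 p.2 \x Pi p.1) A)%E : \bar R))
    (A : set (X * Y)) (mA : measurable A) :
  bold_n_plus W Pi A =
  (\int[@lebesgue_measure R]_(z in [set z : R | (z != 0)%R])
     ((z_density z)%:E * gamma_z B Pi z A))%E.
Proof.
pose K := fun p : R * R => ((B p.1 p.2 \x Pi p.1) A)%E.
have mK : measurable_fun setT K := kernel_meas A mA.
have K0 p : (0 <= K p)%E.
  by apply: integral_ge0 => x _; exact: measure_ge0.
have mBU U : measurable U -> measurable_fun setT (fun p : R * R => B p.1 p.2 U).
  move=> mU; have := kernel_meas (U `*` setT) (measurableX mU measurableT).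
  congr measurable_fun; apply/funext => p /=.
  rewrite product_measure1E // [X in (_ * X)%E](_ : _ = 1%E) ?mule1 //; exact: probability_setT.
have gd0 (r z : R) : 0 <= gauss_density r z.
  by rewrite /gauss_density mulr_ge0 // ?invr_ge0 ?sqrtr_ge0 // expR_ge0.
have ld0 (r : R) : 0 <= lifetime_density r.
  by rewrite /lifetime_density invr_ge0 mulr_ge0 // sqrtr_ge0.
have mgz (r : R) : measurable_fun setT (fun z => gauss_density r z).
  rewrite (_ : (fun z => gauss_density r z) =
    (fun p : R * R => gauss_density p.1 p.2) \o (fun z => (r, z))) //.
  apply: measurableT_comp; first exact: measurable_gauss.
  exact: measurable_fun_pair.
have step1 r : 0 < r -> (W r \x Pi r)%E A =
    (\int[@lebesgue_measure R]_z ((gauss_density r z)%:E * K (r, z)))%E.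
  move=> r0.
  rewrite [LHS](@mix_integral _ _ _ _ R (@lebesgue_measure R) (gauss_density r)
    (gd0 r) (mgz r) (B r)) //.
  - by move=> U mU; have HH := mfun_sec2 (mBU U mU) r; exact HH.
  - by move=> U mU; have HH := B_disint r U r0 mU; exact HH.
  - exact: measurable_fun_xsection.
pose H := fun p : R * R =>
  ((lifetime_density p.1 * gauss_density p.1 p.2)%:E * K p)%E.
have mH : measurable_fun setT H.
  apply: emeasurable_funM => //; apply/measurable_EFinP.
  apply: measurable_funM; last exact: measurable_gauss.
  exact: (measurableT_comp (measurable_lifetime R)).
have H0 p : (0 <= H p)%E by rewrite /H mule_ge0 // lee_fin mulr_ge0.
have Hle0 (r z : R) : r <= 0 -> H (r, z) = 0%E.
  by move=> r0; rewrite /H /= lifetime_le0 // mul0r mul0e.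
have LHS_eq : bold_n_plus W Pi A =
    (\int[@lebesgue_measure R]_r \int[@lebesgue_measure R]_z H (r, z))%E.
  rewrite /bold_n_plus integral_mkcond; apply: eq_integral => r _.
  rewrite /patch; case: ifPn => [/set_mem /= r0|r0].
    rewrite step1 // -ge0_integralZl //.
    - by apply: eq_integral => z _; rewrite /H muleA -EFinM.
    - have HH := emeasurable_funM ((measurable_EFinP _ _).2 (mgz r)) (mfun_sec2 mK r).
      exact HH.
    - by move=> z _; rewrite mule_ge0 // lee_fin.
    - by rewrite lee_fin.
  have r0' : r <= 0.
    rewrite leNgt; apply/negP => h; move/negP: r0; apply. by rewrite inE.
  by rewrite integral0_eq // => z _; rewrite Hle0.
have inner (z : R) : z != 0 ->
    (\int[@lebesgue_measure R]_r H (r, z))%E = ((z_density z)%:E * gamma_z B Pi z A)%E.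
  move=> z0.
  have z2 : 0 < z ^+ 2 by rewrite lt_def sqrf_eq0 z0 sqr_ge0.
  have mHz : measurable_fun setT (fun r => H (r, z)) := mfun_sec1 mH z.
  transitivity (\int[@lebesgue_measure R]_(r in [set r : R | (0 < r)%R]) H (r, z))%E.
    rewrite [RHS]integral_mkcond; apply: eq_integral => r _.
    rewrite /patch; case: ifPn => // r0.
    rewrite Hle0 //; rewrite leNgt; apply/negP => h; move/negP: r0; apply.
    by rewrite inE.
  have mD : measurable [set r : R | (0 < r)%R].
    by rewrite -set_itv_o_infty; exact: measurable_itv.
  rewrite (@scale_integral R _ z2); last 2 first.
  - exact: measurable_funS mHz.
  - by move=> r _; exact: H0.
  have zd0 : 0 <= z_density z.
    rewrite /z_density invr_ge0 mulr_ge0 // ?sqr_ge0 //; apply: mulr_ge0 => //; exact: pi_ge0.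
  have vd0 (v : R) : 0 <= v_density v.
    by rewrite /v_density divr_ge0 ?expR_ge0 // mulr_ge0 // sqr_ge0.
  have mHs : measurable_fun [set v : R | (0 < v)%R] (fun v => H (z ^+ 2 * v, z)).
    exact: (measurable_funS measurableT (@subsetT _ _) (mfun_scale mH (z ^+ 2) z)).
  have mGs : measurable_fun [set v : R | (0 < v)%R]
      (fun v => ((v_density v)%:E * K ((v * z ^+ 2)%R, z))%E).
    apply: (measurable_funS measurableT (@subsetT _ _)).
    exact: (emeasurable_funM ((measurable_EFinP _ _).2 (measurable_vdensity R))
      (mfun_scaler mK (z ^+ 2) z)).
  rewrite -ge0_integralZl //.
  all: try (by move=> v _; exact: H0).
  all: try (by rewrite lee_fin sqr_ge0).
  all: try (by exact mHs).
  rewrite /gamma_z -ge0_integralZl //.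
  all: try (by move=> v _; rewrite mule_ge0 // ?lee_fin //; exact: K0).
  all: try (by rewrite lee_fin).
  all: try (by exact mGs).
  apply: eq_integral => v; rewrite inE /= => v0.
  rewrite /H /= [(z ^+ 2 * v)%R]mulrC muleA -EFinM density_identity //.
  by rewrite EFinM -muleA.
have mG : measurable_fun setT
    (fun z : R => (\int[@lebesgue_measure R]_r H (r, z))%E).
  have HH := @measurable_fun_fubini_tonelli_G _ _ _ _ _ (@lebesgue_measure R) H mH H0; exact HH.
rewrite LHS_eq.
have FT : (\int[@lebesgue_measure R]_r \int[@lebesgue_measure R]_z H (r, z) =
   \int[@lebesgue_measure R]_z \int[@lebesgue_measure R]_r H (r, z))%E.
  apply: fubini_tonelli; last exact: H0.
  exact: mH.
rewrite FT.
transitivity (\int[@lebesgue_measure R]_(z in [set z : R | (z != 0)%R])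
    \int[@lebesgue_measure R]_r H (r, z))%E.
  have mSD : measurable (setT `\ (0:R)) := measurableD measurableT (measurable_set1 _).
  have mfSD : measurable_fun (setT `\ (0:R))
      (fun z : R => (\int[@lebesgue_measure R]_r H (r, z))%E).
    exact: (measurable_funS measurableT (@subsetT _ _) mG).
  have SD := @integral_setD1 R _ 0 setT mSD mfSD.
  rewrite setT_D0 in SD.
  exact: (esym SD).
apply: eq_integral => z; rewrite inE /= => z0.
exact: inner.
Qed.
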